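(* Let $k_1<k_2$ be integers with $k_1\ge 3$, and let $n$ be a positive integer. If $\nu_{k_1}(n+k_1-3)>0$, then $\nu_{k_2}(n+k_2-3)>0$.
   Context: For an integer $k\ge 3$ and a positive integer $m$, $\nu_k(m)$ denotes the number of $k$-tuples of integers $(x_1,\dots,x_k)$ with $1\le x_1\le x_2\le\dots\le x_k$ such that $x_1x_2\cdots x_k+x_1+x_2+\dots+x_k=m$. *)

(* Defs.v *)
From mathcomp Require Import all_boot.
Set Implicit Arguments. Unset Strict Implicit. Unset Printing Implicit Defensive.

(* Every solution has x_i <= m (since x_i <= sum <= m), so counting
   k-tuples with entries in 'I_m.+1 = {0,...,m} is exact. *)
Definition is_sol (m : nat) (s : seq nat) : bool :=
  all (fun x => 0 < x) s && sorted leq s && (\prod_(x <- s) x + \sum_(x <- s) x == m).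

Definition nu (k m : nat) : nat :=
  #|[set t : k.-tuple 'I_m.+1 | is_sol m (map val t)]|.

(* Main.v *)
Require Import Defs.
From mathcomp Require Import all_boot.
From mathcomp Require Import zify.

Lemma nu_gt0P k m : (0 < nu k m) <-> exists s, size s = k /\ is_sol m s.
Proof.
split.
- move/card_gt0P=> [t]; rewrite inE => Ht.
  by exists (map val t); rewrite size_map size_tuple.
- move=> [s [Hs Hsol]].
  have Hb : forall x, x \in s -> x <= m.
    move=> x Hx; move: Hsol => /andP [_ /eqP <-].
    rewrite [X in _ + X](big_rem x Hx) /= addnCA; exact: leq_addr.
  apply/card_gt0P.
  exists (map_tuple (@inord m) (tcast Hs (in_tuple s))).
  rewrite inE /= val_tcast /= -map_comp.
  rewrite (iffLR (eq_in_map _ id s)); last first.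
    move=> x Hx /=; by rewrite inordK // ltnS Hb.
  rewrite map_id.
  exact: Hsol.
Qed.

Lemma sol_cons1 m s : is_sol m s -> is_sol m.+1 (1 :: s).
Proof.
rewrite /is_sol => /andP [/andP [Hp Hs] He].
apply/andP; split; [apply/andP; split|].
- by rewrite /= Hp.
- by case: s Hp Hs {He} => [|x s'] //= /andP [Hx _] ->; rewrite Hx.
- by rewrite !big_cons mul1n addnCA add1n eqSS.
Qed.

Lemma nu_step k m : 0 < nu k m -> 0 < nu k.+1 m.+1.
Proof.
move/nu_gt0P=> [s [Hs Hsol]]; apply/nu_gt0P.
by exists (1 :: s); split; [rewrite /= Hs | exact: sol_cons1].
Qed.

Theorem corollary1 (k1 k2 n : nat) :
  3 <= k1 -> k1 < k2 -> 0 < n ->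
  0 < nu k1 (n + k1 - 3) -> 0 < nu k2 (n + k2 - 3).
Proof.
move=> H3 H12 _ H.
have -> : k2 = k1 + (k2 - k1) by lia.
elim: (k2 - k1) => [|d IH]; first by rewrite addn0.
have -> : n + (k1 + d.+1) - 3 = (n + (k1 + d) - 3).+1 by lia.
rewrite addnS; exact: nu_step.
Qed.
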